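(* Let $I$ and $J$ be compositions of $n$ and let $W'(I,J)$ be the set of packed words $w$ with $\mathrm{WC}(w)=I$ and $\mathrm{DC}(w)=J$. Then the coefficient $D_I^J(q)$ of $\Psi_I$ in $R_J(q)$ is \[ D_I^J(q)=\sum_{w\in W'(I,J)}q^{\mathrm{sinv}(w)}. \]
   Context: Compositions: $I=(i_1,\dots,i_r)$ positive integers with sum $n$; $\ell(I)=r$; $\mathrm{Des}(I)$ the set of partial sums other than $n$; $J\succeq I$ ($J$ coarser) iff $\mathrm{Des}(J)\subseteq\mathrm{Des}(I)$. Over $\mathbb K(q)$ ($\mathrm{char}\,\mathbb K=0$): packed words are words with letter set $\{1,\dots,m\}$; $\mathrm{pack}$ replaces the $t$-th smallest letter by $t$. For a packed word $w=w_1\cdots w_n$: $\mathrm{DC}(w)$ is the composition of $n$ with descent set $\{i:w_i>w_{i+1}\}$; $\mathrm{WC}(w)$ is the composition of $n$ whose descent set is the set of positions $p<n$ with $w_p$ not occurring in $w_{p+1}\cdots w_n$; $\mathrm{sinv}(w)=\#\{i<j:w_i>w_j,\ w_j\text{ not occurring in }w_{j+1}\cdots w_n\}$. $\mathbf{WQSym}$ has basis $\mathbf M_u$ with $\mathbf M_{u'}\mathbf M_{u''}=\sum\mathbf M_u$ over packed $u=v\cdot w$ with $\mathrm{pack}(v)=u'$, $\mathrm{pack}(w)=u''$; $\mathbf M_{u'}\star_q\mathbf M_{u''}=\sum q^{\mathrm{sinv}(u)-\mathrm{sinv}(u')-\mathrm{sinv}(u'')}\mathbf M_u$ (associative). $\mathbf{Sym}$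 is the quotient by the span of $\mathbf M_u-\mathbf M_v$ with $\mathrm{WC}(u)=\mathrm{WC}(v)$, $\zeta$ the quotient map, $\Psi_I=\zeta(\mathbf M_u)$ for $\mathrm{WC}(u)=I$ (a basis). $\tilde S_m=\sum\mathbf M_u$ over nondecreasing packed $u$ of length $m$; $S^J(q)=\zeta(\tilde S_{j_1}\star_q\cdots\star_q\tilde S_{j_l})$; $R_I(q)=\sum_{J\succeq I}(-1)^{\ell(J)-\ell(I)}S^J(q)$. *)

(* Defs.v *)
From HB Require Import structures.
From mathcomp Require Import all_boot all_order all_algebra fraction.
Set Implicit Arguments. Unset Strict Implicit. Unset Printing Implicit Defensive.
Import Order.TTheory GRing.Theory Num.Theory.

Definition is_comp (n : nat) (I : seq nat) : bool :=
  all (fun i => 0 < i) I && (sumn I == n).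

(* Des(I): partial sums other than n = i1, i1+i2, ..., i1+..+i_{r-1} *)
Definition Des (I : seq nat) : seq nat := behead (belast 0 (scanl addn 0 I)).

Definition coarser (J I : seq nat) : bool := all (fun d => d \in Des I) (Des J).

(* the composition of n with descent set S (S a sorted subset of {1..n-1}) *)
Definition comp_of (n : nat) (S : seq nat) : seq nat :=
  if n is 0 then [::] else pairmap (fun a b => b - a) 0 (S ++ [:: n]).

Fixpoint allwords (m n : nat) : seq (seq nat) :=
  if n is n'.+1 then [seq a :: w | a <- iota 1 m, w <- allwords m n'] else [:: [::]].

Definition comps (n : nat) : seq (seq nat) :=
  [seq c <- flatten [seq allwords n k | k <- iota 0 n.+1] | is_comp n c].

Definition packed (w : seq nat) : bool :=
  all (fun x => 0 < x) w && all (fun k => k \in w) (iota 1 (foldr maxn 0 w)).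

Definition pack (w : seq nat) : seq nat :=
  [seq (index x (sort leq (undup w))).+1 | x <- w].

Definition packed_words (n : nat) : seq (seq nat) :=
  [seq w <- allwords n n | packed w].

(* DC(w): descent set {i : w_i > w_{i+1}} (positions 1-indexed) *)
Definition DC (w : seq nat) : seq nat :=
  comp_of (size w)
    [seq p <- iota 1 (size w).-1 | nth 0 w p < nth 0 w p.-1].

Definition WC (w : seq nat) : seq nat :=
  comp_of (size w)
    [seq p <- iota 1 (size w).-1 | nth 0 w p.-1 \notin drop p w].

Definition sinv (w : seq nat) : nat :=
  \sum_(0 <= j < size w) \sum_(0 <= i < j)
     ((nth 0 w j < nth 0 w i) && (nth 0 w j \notin drop j.+1 w)).

Local Open Scope ring_scope.

Section WQSym.
Variables (F : fieldType) (q : F).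

(* an element of (the homogeneous components of) WQSym, given by its
   coefficient on each M_u (u packed) *)
Definition wqsym := seq nat -> F.

Definition wq_one : wqsym := fun u => (u == [::])%:R.

(* bilinear extension of
   M_u' *_q M_u'' = sum_{u = v.w, pack v = u', pack w = u''} q^(sinv u - sinv u' - sinv u'') M_u *)
Definition star (a b : wqsym) : wqsym := fun u =>
  if packed u then
    \sum_(0 <= k < (size u).+1)
       a (pack (take k u)) * b (pack (drop k u)) *
       q ^ ((sinv u)%:Z - (sinv (pack (take k u)))%:Z - (sinv (pack (drop k u)))%:Z)
  else 0.

Definition Stilde (m : nat) : wqsym := fun u =>
  (packed u && sorted leq u && (size u == m))%:R.

Definition Sprod (J : seq nat) : wqsym := foldr star wq_one (map Stilde J).

(* coefficient of Psi_I in zeta(x):  zeta(M_u) = Psi_{WC(u)}, and the Psi_I form a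
   basis of Sym, so this coefficient is the sum of the coefficients of x on the M_u
   with WC(u) = I (such u have length |I|). *)
Definition psi_coef (I : seq nat) (x : wqsym) : F :=
  \sum_(u <- packed_words (sumn I) | WC u == I) x u.

(* D_I^J(q) = coefficient of Psi_I in
   R_J(q) = sum_{K coarser than J} (-1)^(l(K)-l(J)) S^K(q),  S^K(q) = zeta(Sprod K) *)
Definition Dcoef (I J : seq nat) : F :=
  \sum_(K <- comps (sumn J) | coarser K J)
     (-1) ^+ (size J - size K) * psi_coef I (Sprod K).

End WQSym.

Definition qK (K : fieldType) : {fraction {poly K}} := @FracField.tofrac {poly K} 'X.

(* Main.v *)
Require Import Defs.
From HB Require Import structures.
From mathcomp Require Import all_boot all_order all_algebra fraction.
Import GRing.Theory.
From mathcomp Require Import zify.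

Section Part0.
Set Implicit Arguments. Unset Strict Implicit. Unset Printing Implicit Defensive.

Lemma mem_allwords m k w :
  (w \in allwords m k) = (size w == k) && all (fun x => 0 < x <= m) w.
Proof.
elim: k w => [|k IH] [|a w] //=.
- by apply/allpairsP => -[[x y] [_ _]].
- apply/idP/idP => [/allpairsP[[x y] [hx hy [-> ->]]]|].
    by move: hx hy; rewrite mem_iota IH /= => hx /andP[/eqP -> ->]; rewrite eqxx andbT; lia.
  move=> /andP[hs /andP[ha hw]]; apply/allpairsP; exists (a, w); split => //.
    by rewrite /= mem_iota; lia.
  by rewrite /= IH hw andbT.
Qed.

Lemma uniq_allwords m k : uniq (allwords m k).
Proof.
elim: k => //= k IH; apply: allpairs_uniq => //; first exact: iota_uniq.
by move=> [a w] [b v] _ _ /= [-> ->].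
Qed.

Lemma all_pos_size K : all (fun i => 0 < i) K -> size K <= sumn K.
Proof. by elim: K => //= a K IH /andP[ha /IH]; lia. Qed.

Lemma part_le K x : x \in K -> x <= sumn K.
Proof. elim: K => //= a K IH; rewrite in_cons => /orP[/eqP ->|/IH]; lia. Qed.

Lemma mem_comps n K : (K \in comps n) = is_comp n K.
Proof.
rewrite mem_filter; case h: (is_comp n K) => //; rewrite andTb.
move: h => /andP[hp /eqP hs].
apply/flatten_mapP; exists (size K).
  by rewrite mem_iota add0n ltnS -hs all_pos_size.
rewrite mem_allwords eqxx /=; apply/allP => x hx.
by rewrite (allP hp x hx) /= -hs part_le.
Qed.

Lemma uniq_flat m s : uniq s -> uniq (flatten [seq allwords m k | k <- s]).
Proof.
elim: s => //= a s IH /andP[ha us]; rewrite cat_uniq uniq_allwords IH // andbT.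
apply/hasP => -[w /flatten_mapP [k hk hw] hw'].
move: hw hw'; rewrite !mem_allwords => /andP[/eqP e1 _] /andP[/eqP e2 _].
by move: ha; rewrite -e2 e1 hk.
Qed.

Lemma uniq_comps n : uniq (comps n).
Proof. by rewrite filter_uniq // uniq_flat // iota_uniq. Qed.

Definition gsub := fun a b : nat => b - a.

Lemma scanl_last x K : last x (scanl addn x K) = x + sumn K.
Proof. by elim: K x => [|a K IH] x /=; rewrite ?addn0 // IH addnA. Qed.

Lemma Des_rcons K : K != [::] -> rcons (Des K) (sumn K) = scanl addn 0 K.
Proof.
case: K => // a K _; rewrite /Des /= add0n.
by rewrite -(scanl_last a K) -lastI.
Qed.

Lemma comp_pos n K : 0 < n -> is_comp n K -> K != [::].
Proof. by move=> hn /andP[_ /eqP]; case: K => //= hs; rewrite -hs in hn. Qed.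

Lemma comp_ofK n K : is_comp n K -> comp_of n (Des K) = K.
Proof.
case: n => [|n] hK.
  by move: hK => /andP[hp /eqP hs]; case: K hp hs => //= a K /andP[ha _] hs; exfalso; lia.
rewrite /comp_of cats1 -[n.+1](elimT eqP (proj2 (andP hK))) Des_rcons; last exact: (comp_pos (n:=n.+1)).
by apply: scanlK => x y; rewrite addKn.
Qed.

Lemma pairmap_scanl x s : path leq x s -> scanl addn x (pairmap gsub x s) = s.
Proof.
elim: s x => //= a s IH x /andP[hxa hp].
by rewrite /gsub subnKC // IH.
Qed.

Lemma comp_of_E n S : 0 < n -> comp_of n S = pairmap gsub 0 (rcons S n).
Proof. by case: n => // n _; rewrite /comp_of cats1. Qed.

Lemma pathP_leq x s : path ltn x s -> path leq x s.
Proof. by apply: sub_path => a b /ltnW. Qed.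

Lemma DesK n S : 0 < n -> path ltn 0 (rcons S n) -> Des (comp_of n S) = S.
Proof.
move=> hn hp; rewrite /Des comp_of_E // pairmap_scanl; last exact: pathP_leq.
by rewrite belast_rcons.
Qed.

Lemma pos_pairmap x s : path ltn x s -> all (fun i => 0 < i) (pairmap gsub x s).
Proof. by elim: s x => //= a s IH x /andP[h /IH ->]; rewrite /gsub subn_gt0 h. Qed.

Lemma comp_of_comp n S : 0 < n -> path ltn 0 (rcons S n) -> is_comp n (comp_of n S).
Proof.
move=> hn hp; apply/andP; split; first by rewrite comp_of_E // pos_pairmap.
have := scanl_last 0 (comp_of n S).
by rewrite comp_of_E // pairmap_scanl ?pathP_leq // last_rcons add0n => <-.
Qed.

Lemma path_scanl x K : all (fun i => 0 < i) K -> path ltn x (scanl addn x K).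
Proof. by elim: K x => //= a K IH x /andP[ha /IH ->]; rewrite andbT; lia. Qed.

Lemma Des_path n K : 0 < n -> is_comp n K -> path ltn 0 (rcons (Des K) n).
Proof.
move=> hn hK; have hne := comp_pos hn hK.
move: hK => /andP[hp /eqP hs]; rewrite -hs Des_rcons //; exact: path_scanl.
Qed.

Lemma size_Des K : size (Des K) = (size K).-1.
Proof. by rewrite /Des size_behead size_belast size_scanl. Qed.

End Part0.

Section Part1.
Local Open Scope ring_scope.
Set Implicit Arguments. Unset Strict Implicit. Unset Printing Implicit Defensive.

Fixpoint subseqs (s : seq nat) : seq (seq nat) :=
  if s is x :: s' then [seq x :: t | t <- subseqs s'] ++ subseqs s' else [:: [::]].

Lemma cons_inj (x : nat) : injective (cons x).
Proof. by move=> a b []. Qed.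

Lemma mem_subseqs s t : (t \in subseqs s) = subseq t s.
Proof.
elim: s t => [|x s IH] t; first by rewrite mem_seq1 subseq0.
rewrite /= mem_cat IH; case: t => [|y t].
  by rewrite sub0seq orbT.
rewrite [subseq _ _]/=; case: eqVneq => [->|hyx].
  rewrite mem_map; last exact: cons_inj.
  rewrite IH; apply/orP/idP => [[//|/(subseq_trans (subseq_cons t x))//]|h].
  by left.
have -> : (y :: t \in [seq x :: u | u <- subseqs s]) = false.
  by apply/mapP => -[u _ [e _]]; rewrite e eqxx in hyx.
by [].
Qed.

Lemma uniq_subseqs s : uniq s -> uniq (subseqs s).
Proof.
elim: s => //= x s IH /andP[xs us]; rewrite cat_uniq IH // andbT.
rewrite map_inj_uniq ?IH //; last exact: cons_inj.
apply/hasP => -[t ht /mapP[u _ e]]; move: ht; rewrite e mem_subseqs => /mem_subseq h.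
by move: xs; rewrite h // mem_head.
Qed.

Lemma all_cons_filter (x : nat) S D :
  all (fun d => d \in x :: S) D = all (fun d => d \in S) [seq d <- D | d != x].
Proof.
rewrite all_filter; apply: eq_all => d; rewrite in_cons.
by rewrite /=; case: (d == x).
Qed.

Lemma incl_excl (R : pzRingType) (T D : seq nat) : uniq T ->
  \sum_(S <- subseqs T) (-1) ^+ (size T - size S)%N * (all (fun d => d \in S) D)%:R
  = (all (fun d => d \in T) D && all (fun d => d \in D) T)%:R :> R.
Proof.
elim: T D => [|x T IH] D.
  by move=> _; rewrite /= big_seq1 subnn expr0 mul1r andbT.
move=> /= /andP[xT uT]; rewrite big_cat big_map /=.
under eq_bigr => S _ do rewrite subSS all_cons_filter.
rewrite IH //.
rewrite (eq_big_seq (fun S => - ((-1) ^+ (size T - size S)%N * (all (fun d => d \in S) D)%:R))); last first.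
  move=> S; rewrite mem_subseqs => /size_subseq hS.
  by rewrite subSn // exprS mulN1r mulNr.
rewrite sumrN IH //.
case xD: (x \in D).
  have -> : all (fun d => d \in T) D = false.
    by apply/negbTE/negP => /allP /(_ x xD); rewrite (negbTE xT).
  rewrite /= subr0 all_cons_filter; congr ((_ && _)%:R).
  apply: eq_in_all => t tT; rewrite mem_filter; case: eqVneq => // e.
  by move: xT; rewrite -e tT.
have -> : [seq d <- D | d != x] = D.
  apply/all_filterP/allP => d dD; apply/eqP => e.
  by move: xD; rewrite -e dD.
by rewrite subrr andbF.
Qed.

Definition desc (u : seq nat) := [seq p <- iota 1 (size u).-1 | (nth 0 u p < nth 0 u p.-1)%N].
Definition okpos (S u : seq nat) := all (fun p => p \in S) (desc u).

Lemma sorted_path_rcons n S : path ltn 0 (rcons S n) -> sorted ltn S.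
Proof.
move=> /path_sorted h; apply: subseq_sorted h; first exact: ltn_trans.
by rewrite -cats1 prefix_subseq.
Qed.

Lemma path_subseq n S T : subseq S T -> path ltn 0 (rcons T n) -> path ltn 0 (rcons S n).
Proof.
move=> hs hp.
have h : subseq (0 :: rcons S n) (0 :: rcons T n).
  by rewrite /= -!cats1 cat_subseq.
exact: (subseq_sorted ltn_trans h hp).
Qed.

Lemma desc_path u : (0 < size u)%N -> path ltn 0 (rcons (desc u) (size u)).
Proof.
rewrite /desc; case: (size u) => // m _ /=.
have hi : path ltn 0 (rcons (iota 1 m) m.+1).
  have -> : rcons (iota 1 m) m.+1 = iota 1 m.+1 by rewrite -cats1 -[m.+1]addn1 iotaD /= add1n addn1.
  exact: (iota_ltn_sorted 0 m.+2).
apply: path_subseq hi; exact: filter_subseq.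
Qed.

Lemma sorted_subseq_ltn (s1 s2 : seq nat) : sorted ltn s1 -> sorted ltn s2 ->
  {subset s1 <= s2} -> subseq s1 s2.
Proof.
move=> h1 h2 hsub.
have e : s1 = [seq x <- s2 | x \in s1].
  apply: (irr_sorted_eq ltn_trans ltnn) => //.
    by rewrite sorted_filter //; exact: ltn_trans.
  move=> x; rewrite mem_filter; case h: (x \in s1) => //=.
  by rewrite (hsub x h).
by rewrite [X in subseq X _]e filter_subseq.
Qed.

Lemma C_lemma (R : pzRingType) n u J : (0 < n)%N -> size u = n -> is_comp n J ->
  \sum_(K <- comps n | coarser K J) (-1) ^+ (size J - size K)%N * (okpos (Des K) u)%:R
  = (DC u == J)%:R :> R.
Proof.
move=> hn hu hJ.
set T := Des J. set D := desc u.
have hT := Des_path hn hJ.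
have hD : path ltn 0 (rcons D n) by rewrite /D -hu desc_path // hu.
transitivity (\sum_(S <- [seq Des K | K <- comps n & coarser K J])
   ((-1) ^+ (size T - size S)%N * (all (fun d => d \in S) D)%:R : R)).
  rewrite big_map big_filter [RHS]big_seq_cond [LHS]big_seq_cond; apply: eq_bigr => K /andP[+ _]; rewrite mem_comps => hK.
  rewrite /T !size_Des; have := comp_pos hn hK; have := comp_pos hn hJ.
  by case: (J) => // a J' _; case: (K) => // b K' _ /=; rewrite subSS.
rewrite (perm_big (subseqs T)); last first.
  apply: uniq_perm.
  - rewrite map_inj_in_uniq ?filter_uniq ?uniq_flat ?iota_uniq //.
    move=> K1 K2; rewrite !mem_filter => /andP[_ /andP[h1 _]] /andP[_ /andP[h2 _]] e.
    by rewrite -(comp_ofK h1) -(comp_ofK h2) e.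
  - apply: uniq_subseqs; rewrite (sorted_uniq ltn_trans ltnn) //.
    exact: sorted_path_rcons hT.
  - move=> S; rewrite mem_subseqs; apply/mapP/idP => [[K]|hS].
      rewrite mem_filter mem_comps => /andP[hc hK] ->.
      apply: sorted_subseq_ltn; [exact: sorted_path_rcons (Des_path hn hK)
        | exact: sorted_path_rcons hT | exact/allP].
    have hpS := path_subseq hS hT.
    exists (comp_of n S); last by rewrite DesK.
    rewrite mem_filter mem_comps comp_of_comp // andbT /coarser DesK //.
    apply/allP => x hx; exact: (mem_subseq hS hx).
rewrite incl_excl; last first.
  rewrite (sorted_uniq ltn_trans ltnn) //; exact: sorted_path_rcons hT.
suff -> : (all (fun d => d \in T) D && all (fun d => d \in D) T) = (DC u == J) by [].
have inj : (comp_of n D == comp_of n T) = (D == T).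
  apply/eqP/eqP => [e|->//]; by rewrite -(DesK hn hD) e DesK.
change (DC u) with (comp_of (size u) D); rewrite hu -[J in RHS](comp_ofK hJ) -/T inj.
apply/andP/eqP => [[h1 h2]|->].
  apply: (irr_sorted_eq ltn_trans ltnn);
    [exact: sorted_path_rcons hD | exact: sorted_path_rcons hT|].
  by move=> x; apply/idP/idP => [/(allP h1)|/(allP h2)].
by split; apply/allP => x.
Qed.

End Part1.

Section Part2.
Set Implicit Arguments. Unset Strict Implicit. Unset Printing Implicit Defensive.

Definition pf (w : seq nat) x := (index x (sort leq (undup w))).+1.
Lemma packE w : pack w = map (pf w) w. Proof. by []. Qed.

Lemma pf_mono (w : seq nat) : {in w &, forall x y, (pf w x < pf w y) = (x < y)}.
Proof.
move=> x y hx hy; rewrite /pf ltnS.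
set s := sort leq (undup w).
have ss : sorted ltn s.
  by rewrite ltn_sorted_uniq_leq sort_uniq undup_uniq (sort_sorted leq_total).
have mx : x \in s by rewrite mem_sort mem_undup.
have my : y \in s by rewrite mem_sort mem_undup.
have hn := sorted_ltn_nth ltn_trans 0 ss.
apply/idP/idP => h.
  have := hn (index x s) (index y s); rewrite !inE !index_mem mx my !nth_index //.
  by move=> /(_ isT isT h).
case: ltngtP => // hyx.
  have := hn (index y s) (index x s); rewrite !inE !index_mem mx my !nth_index //.
  by move=> /(_ isT isT hyx) hh; move: hh; rewrite ltnNge (ltnW h).
have : nth 0 s (index x s) = nth 0 s (index y s) by rewrite hyx.
by rewrite !nth_index // => e; rewrite e ltnn in h.
Qed.

Lemma mono_inj (w : seq nat) g : {in w &, forall x y, (g x < g y) = (x < y)} ->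
  {in w &, injective g}.
Proof.
move=> hg x y hx hy e; apply/eqP; case: (ltngtP x y) => // h.
  by have := hg x y hx hy; rewrite h e ltnn.
by have := hg y x hy hx; rewrite h e ltnn.
Qed.

Lemma sinv_map (w : seq nat) g : {in w &, forall x y, (g x < g y) = (x < y)} -> sinv (map g w) = sinv w.
Proof.
move=> hg; have ginj := mono_inj hg.
rewrite /sinv size_map; apply: eq_big_nat => j /andP[_ hj]; apply: eq_big_nat => i /andP[_ hij].
have hi : i < size w by lia.
rewrite !(nth_map 0) // hg ?mem_nth //.
congr (_ && ~~ _); rewrite -map_drop.
apply/mapP/idP => [[y hy e]|h]; last by exists (nth 0 w j).
by rewrite (ginj _ _ (mem_nth 0 hj) (mem_drop hy) e).
Qed.

Lemma desc_map (w : seq nat) g : {in w &, forall x y, (g x < g y) = (x < y)} -> desc (map g w) = desc w.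
Proof.
move=> hg; rewrite /desc size_map; apply: eq_in_filter => p; rewrite mem_iota => hp.
have h1 : p < size w by lia.
have h2 : p.-1 < size w by lia.
by rewrite !(nth_map 0) // hg ?mem_nth.
Qed.

Lemma foldr_maxn_le l b : all (fun x => x <= b) l -> foldr maxn 0 l <= b.
Proof. by elim: l => //= a l IH /andP[ha hl]; rewrite geq_max ha IH. Qed.

Lemma packed_pack w : packed (pack w).
Proof.
rewrite /packed; apply/andP; split; first by apply/allP => x /mapP[y _ ->].
set s := sort leq (undup w).
have hb : foldr maxn 0 (pack w) <= size s.
  apply: foldr_maxn_le; apply/allP => x /mapP[y hy ->].
  by rewrite /pf index_mem mem_sort mem_undup.
apply/allP => k; rewrite mem_iota => hk.
have hk' : k.-1 < size s by lia.
apply/mapP; exists (nth 0 s k.-1).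
  by have := mem_nth 0 hk'; rewrite mem_sort mem_undup.
rewrite /pf index_uniq ?sort_uniq ?undup_uniq //; lia.
Qed.

Lemma okposP S u : okpos S u =
  all (fun p => (p \in S) || (nth 0 u p.-1 <= nth 0 u p)) (iota 1 (size u).-1).
Proof.
rewrite /okpos /desc all_filter; apply: eq_all => p /=; rewrite [in RHS]leqNgt.
by case: (_ < _); case: (p \in S).
Qed.

Lemma sorted_okpos u : sorted leq u = okpos [::] u.
Proof.
rewrite okposP; apply/(sortedP 0)/allP => [h p|h i hi].
  rewrite mem_iota => /andP[p1 hp] /=.
  by have := h p.-1; rewrite (prednK p1) => ->//; lia.
by have := h i.+1; rewrite mem_iota /=; apply; lia.
Qed.

Lemma okpos_map S (w : seq nat) g : {in w &, forall x y, (g x < g y) = (x < y)} ->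
  okpos S (map g w) = okpos S w.
Proof. by move=> hg; rewrite /okpos desc_map. Qed.

Lemma sorted_pack w : sorted leq (pack w) = sorted leq w.
Proof. by rewrite !sorted_okpos packE okpos_map //; exact: pf_mono. Qed.

Lemma okpos_pack S w : okpos S (pack w) = okpos S w.
Proof. by rewrite packE okpos_map //; exact: pf_mono. Qed.

Lemma sinv_pack w : sinv (pack w) = sinv w.
Proof. by rewrite packE sinv_map //; exact: pf_mono. Qed.

Lemma sinv_sorted w : sorted leq w -> sinv w = 0.
Proof.
move=> hs; have hn := sorted_leq_nth leq_trans leqnn 0 hs.
rewrite /sinv big_nat big1 // => j /andP[_ hj]; rewrite big_nat big1 // => i /andP[_ hij].
have hi : i < size w by lia.
have := hn i j; rewrite !inE hi hj => /(_ isT isT (ltnW hij)).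
by rewrite leqNgt => /negbTE ->.
Qed.

Lemma scanl_shift x K : scanl addn x K = map (addn x) (scanl addn 0 K).
Proof.
elim: K x => //= a K IH x; rewrite add0n IH [in RHS]IH -map_comp.
by congr (_ :: _); apply: eq_map => y /=; rewrite addnA.
Qed.

Lemma scanl_shift2 x y K : scanl addn (x + y) K = map (addn x) (scanl addn y K).
Proof. by elim: K y => //= a K IH y; rewrite -addnA IH. Qed.

Lemma Des_cons k K : K != [::] -> Des (k :: K) = k :: map (addn k) (Des K).
Proof.
case: K => // a K _; rewrite /Des /= !add0n scanl_shift2.
by rewrite belast_map.
Qed.

Lemma okpos_cons k K (u : seq nat) : 0 < k -> 0 < sumn K -> size u = k + sumn K ->
  okpos (Des (k :: K)) u = sorted leq (take k u) && okpos (Des K) (drop k u).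
Proof.
move=> hk hm hu.
have hK : K != [::] by case: K hm hu.
have hku : k <= size u by lia.
rewrite sorted_okpos !okposP (size_takel hku) size_drop hu.
have e1 : (k + sumn K).-1 = k.-1 + sumn K by lia.
have e2 : (k + sumn K - k).-1 = (sumn K).-1 by lia.
have e3 : iota (1 + k.-1) (sumn K) = k :: iota (k + 1) (sumn K).-1.
  by rewrite -[in LHS](prednK hm) /= addn1 add1n (prednK hk).
rewrite e1 e2 iotaD e3 all_cat /= Des_cons // mem_head /=.
congr (_ && _).
  apply: eq_in_all => p; rewrite mem_iota => hp.
  have -> : (p \in k :: map (addn k) (Des K)) = false.
    rewrite in_cons; apply/negbTE/norP; split; first by apply/eqP; lia.
    by apply/mapP => -[x _ e]; lia.
  by rewrite !nth_take //; lia.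
rewrite iotaDl all_map; apply: eq_in_all => p; rewrite mem_iota => hp /=.
rewrite in_cons (mem_map (@addnI k)).
have -> : (k + p == k) = false by apply/negbTE/eqP; lia.
have -> : (k + p).-1 = k + p.-1 by lia.
by rewrite !nth_drop.
Qed.

End Part2.

Section Part3.
Set Implicit Arguments. Unset Strict Implicit. Unset Printing Implicit Defensive.
Local Open Scope ring_scope.

Lemma Stilde_pack (F : fieldType) k v :
  Stilde F k (pack v) = (sorted leq v && (size v == k)%N)%:R.
Proof. by rewrite /Stilde packed_pack sorted_pack size_map. Qed.

Lemma qexp_simpl (F : fieldType) (q : F) (a b : nat) : q != 0 ->
  q ^+ b * q ^ ((a%:Z) - (0%N)%:Z - (b%:Z)) = q ^+ a.
Proof.
move=> q0; rewrite subr0 !exprnP -expfzDr // addrC subrK //.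
Qed.

Lemma Sprod_eq (F : fieldType) (q : F) K : q != 0 -> all (fun i => 0 < i)%N K ->
  forall u, Sprod q K u =
    (packed u && (size u == sumn K)%N && okpos (Des K) u)%:R * q ^+ sinv u.
Proof.
move=> q0; elim: K => [_ u | k K IH /andP[hk hK] u].
  rewrite /Sprod /= /wq_one; case: u => [|a u] /=.
    by rewrite /sinv /= big_nil expr0 mulr1.
  by rewrite andbF /= mul0r.
have IHp : forall d, Sprod q K (pack d) =
    ((size d == sumn K)%N && okpos (Des K) d)%:R * q ^+ sinv d.
  by move=> d; rewrite IH // packed_pack size_map okpos_pack sinv_pack.
rewrite /Sprod /= -/(Sprod q K) {1}/star.
case pu: (packed u); last by rewrite /= mul0r.
under eq_bigr => j _ do rewrite Stilde_pack IHp !sinv_pack.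
rewrite /=.
case: (leqP k (size u)) => hku; last first.
  rewrite big1_seq; last first.
    move=> j /andP[_]; rewrite mem_index_iota => hj.
    rewrite size_takel; last by lia.
    have -> : (j == k)%N = false by apply/negbTE/eqP; lia.
    by rewrite andbF /= !mul0r.
  have -> : (size u == k + sumn K)%N = false by apply/negbTE/eqP; lia.
  by rewrite mul0r.
have hkr : k \in index_iota 0 (size u).+1 by rewrite mem_index_iota; lia.
rewrite (bigD1_seq k hkr (iota_uniq _ _)) /=.
rewrite big1_seq; last first.
  move=> j /andP[hjk]; rewrite mem_index_iota => hj.
  rewrite size_takel; last by lia.
  by rewrite (negbTE hjk) andbF /= !mul0r.
rewrite addr0 (size_takel hku) eqxx andbT size_drop.
case hs: (size u == k + sumn K)%N; last first.
  have -> : (size u - k == sumn K)%N = false.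
    by apply/negbTE/eqP => e; move/eqP: hs; lia.
  by rewrite /= !(mul0r, mulr0).
have -> : (size u - k == sumn K)%N by apply/eqP; move/eqP: hs; lia.
move/eqP: hs => hs.
have hok : okpos (Des (k :: K)) u = sorted leq (take k u) && okpos (Des K) (drop k u).
  case: (posnP (sumn K)) => hm; last exact: okpos_cons.
  have -> : K = [::] by case: K hK hm hs IH IHp => //= a K /andP[ha _]; lia.
  have hsu : size u = k by rewrite hs hm addn0.
  rewrite /Des /= /okpos.
  have -> : drop k u = [::] by rewrite -hsu drop_size.
  by rewrite -hsu take_size sorted_okpos andbT.
rewrite hok /=.
case st: (sorted leq (take k u)); last by rewrite /= !mul0r.
rewrite (sinv_sorted st) /=.
case: (okpos (Des K) (drop k u)); last by rewrite /= !(mul0r, mulr0).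
by rewrite !mulr1n !mul1r qexp_simpl.
Qed.

End Part3.

Section Part4.
Set Implicit Arguments. Unset Strict Implicit. Unset Printing Implicit Defensive.
Local Open Scope ring_scope.

Lemma comp0 K : is_comp 0 K -> K = [::].
Proof. by move=> /andP[hp /eqP hs]; case: K hp hs => //= a K /andP[ha _] hs; exfalso; lia. Qed.

Lemma mem_pw n u : u \in packed_words n -> packed u /\ size u = n.
Proof. by rewrite mem_filter mem_allwords => /andP[-> /andP[/eqP -> _]]. Qed.

End Part4.

Local Open Scope ring_scope.

Theorem mainTheorem10 (K : fieldType) (charK0 : [pchar K] =i pred0)
  (n : nat) (I J : seq nat) :
  is_comp n I -> is_comp n J ->
  Dcoef (qK K) I J =
  \sum_(w <- packed_words n | (WC w == I) && (DC w == J)) qK K ^+ sinv w.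
Proof.
move=> hI hJ.
set q := qK K.
have q0 : q != 0 by rewrite /q /qK tofrac_eq0 polyX_eq0.
have sI : sumn I = n by case/andP: hI => _ /eqP.
have sJ : sumn J = n by case/andP: hJ => _ /eqP.
case: (posnP n) => hn.
  rewrite hn in hI hJ; rewrite (comp0 hI) (comp0 hJ) hn /Dcoef /=.
  have -> : comps 0 = [:: [::]] by [].
  have -> : packed_words 0 = [:: [::]] by [].
  rewrite !big_cons !big_nil /= /psi_coef /=.
  have -> : packed_words 0 = [:: [::]] by [].
  rewrite !big_cons !big_nil /= /sinv big_nil.
  by rewrite subnn expr0 mul1r !addr0 /Sprod /= /wq_one /= mulr1n.
transitivity (\sum_(Kc <- comps n | coarser Kc J) (-1) ^+ (size J - size Kc)%N *
   \sum_(u <- packed_words n | WC u == I) ((okpos (Des Kc) u)%:R * q ^+ sinv u)).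
  rewrite /Dcoef sJ big_seq_cond [RHS]big_seq_cond; apply: eq_bigr => Kc /andP[hKc _]; congr (_ * _).
  rewrite /psi_coef sI big_seq_cond [RHS]big_seq_cond; apply: eq_bigr => u /andP[hu _].
  have [pu su] := mem_pw hu.
  move: hKc; rewrite mem_comps => /andP[hp /eqP hs].
  by rewrite Sprod_eq // pu su hs eqxx.
under eq_bigr => Kc _ do rewrite mulr_sumr.
rewrite exchange_big /=.
rewrite [RHS]big_mkcondr big_seq_cond [RHS]big_seq_cond; apply: eq_bigr => u /andP[hu _].
have [pu su] := mem_pw hu.
under eq_bigr do rewrite mulrA.
rewrite -mulr_suml C_lemma //.
by case: (DC u == J); rewrite ?mul1r ?mul0r.
Qed.
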